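(* Let $\mathbb{K}$ be a field of characteristic not $2$, $p\geq 1$, $\lambda,\mu\in\mathbb{K}$, and $f:M_{1,p}(\mathbb{K})\to\mathbb{K}$, $g:M_{p,1}(\mathbb{K})\to\mathbb{K}$ linear forms. Suppose that for every $L\in M_{1,p}(\mathbb{K})$ and $C\in M_{p,1}(\mathbb{K})$, the matrix $$M_{L,C}=\begin{bmatrix}0&L&0\\ \mu C&0_{p\times p}&C\\ f(L)+g(C)&\lambda L&0\end{bmatrix}\in M_{p+2}(\mathbb{K})$$ has at most two distinct eigenvalues in $\overline{\mathbb{K}}$. Then $\lambda+\mu=0$. If moreover $\mathbb{K}$ has characteristic not $3$, then also $f=0$ and $g=0$.
   Context: $\overline{\mathbb{K}}$ is an algebraic closure of $\mathbb{K}$. *)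

(* Defs.v *)
From HB Require Import structures.
From mathcomp Require Import all_boot all_order all_algebra.
Set Implicit Arguments. Unset Strict Implicit. Unset Printing Implicit Defensive.
Import Order.TTheory GRing.Theory Num.Theory.
Local Open Scope ring_scope.

Definition MLC (K : fieldType) (p : nat) (lambda mu : K)
  (f : 'rV[K]_p -> K) (g : 'cV[K]_p -> K) (L : 'rV[K]_p) (C : 'cV[K]_p)
  : 'M[K]_(1 + p + 1) :=
  col_mx
    (col_mx (row_mx (row_mx (0 : 'M[K]_(1,1)) L) (0 : 'M[K]_(1,1)))
            (row_mx (row_mx (mu *: C) (0 : 'M[K]_(p,p))) C))
    (row_mx (row_mx ((f L + g C)%:M : 'M[K]_(1,1)) (lambda *: L))
            (0 : 'M[K]_(1,1))).

Definition at_most_two_eigenvalues (F : fieldType) (n : nat) (A : 'M[F]_n) :=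
  forall a b c : F, eigenvalue A a -> eigenvalue A b -> eigenvalue A c ->
    a = b \/ a = c \/ b = c.

(* Main.v *)
Require Import Defs.
From HB Require Import structures.
From mathcomp Require Import all_boot all_order all_algebra ring.
Import GRing.Theory.
Local Open Scope ring_scope.
Set Implicit Arguments. Unset Strict Implicit. Unset Printing Implicit Defensive.
Lemma cubic_disc (F : closedFieldType) (a b : F) :
 (forall r1 r2 r3, r1^+3 + a*r1 + b = 0 -> r2^+3 + a*r2+b=0 -> r3^+3+a*r3+b=0 ->
   r1=r2 \/ r1=r3 \/ r2=r3) -> 4 * a^+3 + 27 * b^+2 = 0.
Proof.
move=> Hr.
have [r1 e1] := @solve_monicpoly F 3 (fun i => if i == 0%N then -b else if i == 1%N then -a else 0) isT.
rewrite !big_ord_recr big_ord0 /= in e1.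
have [r2 e2] := @solve_monicpoly F 2 (fun i => if i == 0%N then -(r1^+2 + a) else -r1) isT.
rewrite !big_ord_recr big_ord0 /= in e2.
have hb : b = - r1^+3 - a * r1.
  apply/eqP; rewrite -subr_eq0; apply/eqP; rewrite e1; ring.
have ha : a = - (r2^+2 + r1*r2 + r1^+2).
  apply/eqP; rewrite -subr_eq0; apply/eqP; rewrite e2; ring.
have key : (r1 - r2) * (r1 - (-r1-r2)) * (r2 - (-r1-r2)) = 0.
  have [e|[e|e]] := Hr r1 r2 (-r1-r2) ltac:(rewrite hb ha; ring) ltac:(rewrite hb ha; ring) ltac:(rewrite hb ha; ring).
  - by rewrite -e subrr !mul0r.
  - by rewrite -e subrr mulr0 mul0r.
  - by rewrite -e subrr mulr0.
have -> : 4 * a^+3 + 27 * b^+2 = - ((r1 - r2) * (r1 - (-r1-r2)) * (r2 - (-r1-r2)))^+2.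
  rewrite hb ha; ring.
by rewrite key expr0n /= oppr0.
Qed.
Definition NN {F : fieldType} {p : nat} (lambda mu s : F) (L : 'rV[F]_p) (C : 'cV[F]_p)
  : 'M[F]_(1 + p + 1) :=
  col_mx
    (col_mx (row_mx (row_mx (0 : 'M[F]_(1,1)) L) (0 : 'M[F]_(1,1)))
            (row_mx (row_mx (mu *: C) (0 : 'M[F]_(p,p))) C))
    (row_mx (row_mx (s%:M : 'M[F]_(1,1)) (lambda *: L))
            (0 : 'M[F]_(1,1))).

Lemma eigN (F : fieldType) p (la mu s t : F) (L:'rV[F]_p) (C:'cV[F]_p) r a b k :
 L *m C = t%:M -> k*mu*t + b*s = r*a -> a + b*la = r*k -> k*t = r*b -> b != 0 ->
 eigenvalue (NN la mu s L C) r.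
Proof.
move=> hLC h1 h2 h3 hb.
apply/eigenvalueP; exists (row_mx (row_mx a%:M (k*:L)) b%:M).
  rewrite /NN !mul_row_col !mul_mx_row !mulmx0 !mul_scalar_mx -!scalemxAl -scalemxAr hLC.
  rewrite !add_row_mx !scale_row_mx ?scaler0 ?addr0 ?add0r.
  rewrite !scale_scalar_mx -raddfD !scalerA -scalerDl mulrA h1 h2 h3.
  done.
apply: contraNneq hb => /eqP.
rewrite row_mx_eq0 => /andP[_ /eqP e].
by have := congr1 (fun M : 'M[F]_1 => M 0 0) e; rewrite /= !mxE eqxx mulr1n => ->.
Qed.
Definition DD {K : fieldType} (ka al be l c : K) :=
  4 * (-(ka * (l * c)))^+3 + 27 * (-((l * al + c * be) * (l * c)))^+2.

Lemma notchar (K : fieldType) (n : nat) : prime n -> n \notin [pchar K] -> (n%:R : K) != 0.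
Proof. by move=> pn; apply: contra => h; rewrite inE /= pn h. Qed.

Lemma final_alg (K : fieldType) (ka al be : K) : (2%:R : K) != 0 ->
  (forall l, DD ka al be l 1 = 0) -> ka = 0 /\ ((3%:R : K) != 0 -> al = 0 /\ be = 0).
Proof.
move=> h2 hD.
have e1 := hD 1; have e2 := hD (-1); have e3 := hD 2%:R.
rewrite /DD in e1 e2 e3.
have h4 : (4%:R : K) != 0 by rewrite (_ : 4%:R = 2%:R * 2%:R :> K) ?mulf_neq0 //; ring.
have [h3|h3] := eqVneq (3%:R : K) 0.
  split; last by [].
  have : 4%:R * ka^+3 = 0.
    rewrite -[RHS]oppr0 -e1 (_ : 27%:R = 3%:R * 9%:R :> K); last by ring.
    rewrite h3; ring.
  by move/eqP; rewrite mulf_eq0 (negPf h4) expf_eq0 /= => /eqP.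
have ha : (2%:R^+2 * 3%:R^+4 : K) * al^+2 = 0.
  rewrite (_ : _ * al^+2 = (4 * (- (ka * (2%:R * 1))) ^+ 3 + 27 * (- ((2%:R * al + 1 * be) * (2%:R * 1))) ^+ 2)
     - 6%:R * (4 * (- (ka * (1 * 1))) ^+ 3 + 27 * (- ((1 * al + 1 * be) * (1 * 1))) ^+ 2)
     + 2%:R * (4 * (- (ka * (-1 * 1))) ^+ 3 + 27 * (- ((-1 * al + 1 * be) * (-1 * 1))) ^+ 2)); last by ring.
  by rewrite e1 e2 e3; ring.
have al0 : al = 0.
  by move/eqP: ha; rewrite !mulf_eq0 (negPf h2) (negPf h3) /= orbb => /eqP.
have hb : (2%:R * 3%:R^+3 : K) * be^+2 = 0.
  rewrite (_ : _ * be^+2 = (4 * (- (ka * (1 * 1))) ^+ 3 + 27 * (- ((1 * al + 1 * be) * (1 * 1))) ^+ 2)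
     + (4 * (- (ka * (-1 * 1))) ^+ 3 + 27 * (- ((-1 * al + 1 * be) * (-1 * 1))) ^+ 2)); last by rewrite al0; ring.
  by rewrite e1 e2; ring.
have be0 : be = 0.
  by move/eqP: hb; rewrite !mulf_eq0 (negPf h2) (negPf h3) /= orbb => /eqP.
split; last by [].
have : 4%:R * ka^+3 = 0.
  by rewrite -[RHS]oppr0 -e1 al0 be0; ring.
by move/eqP; rewrite mulf_eq0 (negPf h4) expf_eq0 /= => /eqP.
Qed.

Lemma lin_eq (F : fieldType) (x y c e : F) : e = 0 -> x - y = c * e -> x = y.
Proof. by move=> -> h; apply/eqP; rewrite -subr_eq0 h mulr0. Qed.

Lemma root_eig (F : fieldType) p (la mu ka s t r : F) (L : 'rV[F]_p) (C : 'cV[F]_p) :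
  ka = la + mu -> L *m C = t%:M -> t != 0 ->
  r^+3 + (-(ka*t))*r + (-(s*t)) = 0 -> eigenvalue (NN la mu s L C) r.
Proof.
move=> hk hLC tn0 hr.
have [r0|rn0] := eqVneq r 0.
  move: hr; rewrite r0 => hr.
  have st0 : s * t = 0 by apply: (@lin_eq _ _ _ (-1) _ hr); ring.
  move/eqP: st0; rewrite mulf_eq0 (negPf tn0) orbF => /eqP s0.
  apply: (@eigN _ _ _ _ _ t _ _ _ (-la) 1 0) => //; rewrite ?s0; try ring.
  exact: oner_neq0.
apply: (@eigN _ _ _ _ _ t _ _ _ (r*(mu*r+s)) (r^+2) (ka*r+s)) => //.
- apply: (@lin_eq _ _ _ (-mu) _ hr); rewrite hk; ring.
- rewrite hk; ring.
- apply: (@lin_eq _ _ _ (-1) _ hr); ring.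
- by rewrite expf_neq0.
Qed.

Lemma map_MLC (K : fieldType) (Kbar : fieldType) (iota : {rmorphism K -> Kbar}) p
  (la mu : K) (f : 'rV[K]_p -> K) (g : 'cV[K]_p -> K) L C :
  map_mx iota (MLC la mu f g L C) =
  NN (iota la) (iota mu) (iota (f L + g C)) (map_mx iota L) (map_mx iota C).
Proof.
by rewrite /MLC /NN !map_col_mx !map_row_mx !map_mx0 !map_mxZ map_scalar_mx.
Qed.

Lemma delta11 (F : fieldType) : (delta_mx 0 0 : 'M[F]_1) = 1%:M.
Proof. by apply/matrixP => i k; rewrite !ord1 !mxE. Qed.

Theorem mainTheorem16 (K : fieldType) (Kbar : closedFieldType)
  (iota : {rmorphism K -> Kbar})
  (Kbar_alg : forall x : Kbar, algebraicOver iota x)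
  (charK2 : 2 \notin [pchar K])
  (p : nat) (hp : (1 <= p)%N) (lambda mu : K)
  (f : {linear 'rV[K]_p -> K^o}) (g : {linear 'cV[K]_p -> K^o})
  (H : forall (L : 'rV[K]_p) (C : 'cV[K]_p),
         at_most_two_eigenvalues (map_mx iota (MLC lambda mu f g L C))) :
  lambda + mu = 0 /\
  (3 \notin [pchar K] -> (forall L, f L = 0) /\ (forall C, g C = 0)).
Proof.
have disc : forall L C t, L *m C = t%:M ->
    4 * (-((lambda + mu) * t))^+3 + 27 * (-((f L + g C) * t))^+2 = 0.
  move=> L C t hLC.
  have [->|tn0] := eqVneq t 0; first by ring.
  apply/eqP; rewrite -(fmorph_eq0 iota); apply/eqP.
  rewrite rmorphD (rmorphM iota 4%:R) (rmorphM iota 27%:R) !rmorphXn !rmorphN !rmorphM !rmorph_nat.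
  apply: cubic_disc => r1 r2 r3 h1 h2 h3.
  have hLC' : map_mx iota L *m map_mx iota C = (iota t)%:M.
    by rewrite -map_mxM hLC map_scalar_mx.
  have tn0' : iota t != 0 by rewrite fmorph_eq0.
  by apply: (H L C); rewrite map_MLC; apply: (root_eig (rmorphD _ _ _) hLC' tn0'); first [exact h1 | exact h2 | exact h3].
have hD : forall j l c, DD (lambda + mu) (f (delta_mx 0 j)) (g (delta_mx j 0)) l c = 0.
  move=> j l c; rewrite /DD.
  have e1 : f (l *: delta_mx 0 j) = l * f (delta_mx 0 j) by rewrite linearZ.
  have e2 : g (c *: delta_mx j 0) = c * g (delta_mx j 0) by rewrite linearZ.
  rewrite -e1 -e2; apply: disc.
  by rewrite -scalemxAl -scalemxAr mul_delta_mx delta11 !scale_scalar_mx mulr1 mulrC.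
have h2 := notchar (isT : prime 2) charK2.
have [hk _] := final_alg h2 (fun l => hD (Ordinal hp) l 1).
split => // h3n.
have h3 := notchar (isT : prime 3) h3n.
have hfg : forall j, f (delta_mx 0 j) = 0 /\ g (delta_mx j 0) = 0.
  by move=> j; have [_ /(_ h3)] := final_alg h2 (fun l => hD j l 1).
split.
  move=> L; rewrite (row_sum_delta L) linear_sum big1 // => j _.
  by rewrite linearZ /= (hfg j).1 scaler0.
move=> C; rewrite (matrix_sum_delta C) linear_sum big1 // => i _.
rewrite linear_sum big1 // => j _.
by rewrite (ord1 j) linearZ /= (hfg i).2 scaler0.
Qed.
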